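(* Let $n\ge 1$, $b_i>0$, $\alpha_i>0$ for $i=1,\dots,n$, and $g(t)=b_1e^{-\alpha_1 t}-\sum_{i=2}^n b_ie^{-\alpha_i t}$. Suppose that $$2(\alpha_1-\alpha_j)^2\ge\max_{1\le i\le n}(\alpha_i-\alpha_j)^2\quad\text{for all } j\ge 2.$$ Then $g\,\mathds{1}_{[0,\infty)}$ is nonnegative if and only if $g\,\mathds{1}_{[0,\infty)}$ is log-concave.
   Context: A function $f:\mathbb{R}\to\mathbb{R}_{\ge0}$ is log-concave if $f(\lambda x+(1-\lambda)y)\ge f(x)^\lambda f(y)^{1-\lambda}$ for all $x,y\in\mathbb{R}$ and $\lambda\in[0,1]$ (equivalently $\log f$ is concave as a function into $\mathbb{R}\cup\{-\infty\}$). *)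

(* Defs.v *)
From HB Require Import structures.
From mathcomp Require Import all_boot all_order all_algebra.
From mathcomp Require Import all_classical all_reals all_analysis.
Set Implicit Arguments. Unset Strict Implicit. Unset Printing Implicit Defensive.
Import Order.TTheory GRing.Theory Num.Theory.
Local Open Scope ring_scope.

(* f : R -> R_{>=0} is log-concave:
   f (l x + (1-l) y) >= f x ^ l * f y ^ (1-l) for all x y and l in [0,1],
   with the real power powR (convention 0 `^ 0 = 1). *)
Definition log_concave (R : realType) (f : R -> R) : Prop :=
  (forall x, 0 <= f x) /\
  forall x y l : R, 0 <= l -> l <= 1 ->
    (f x `^ l) * (f y `^ (1 - l)) <= f (l * x + (1 - l) * y).

Definition gfun (R : realType) (n : nat) (b a : nat -> R) (t : R) : R :=
  b 1%N * expR (- a 1%N * t) - \sum_(2 <= i < n.+1) b i * expR (- a i * t).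

Definition gind (R : realType) (n : nat) (b a : nat -> R) (t : R) : R :=
  if 0 <= t then gfun n b a t else 0.

(* Main.v *)
Require Import Defs.
From HB Require Import structures.
From mathcomp Require Import all_boot all_order all_algebra.
From mathcomp Require Import all_classical all_reals all_analysis.
From mathcomp Require Import ring lra.
Import Order.TTheory GRing.Theory Num.Theory.
Local Open Scope ring_scope.

Lemma expR_conv (R : realType) (l p q : R) : 0 <= l -> l <= 1 ->
  expR (l * p + (1 - l) * q) <= l * expR p + (1 - l) * expR q.
Proof.
move=> l0 l1; have := @convex_expR R (Itv01 l0 l1) p q.
by rewrite !convRE /=.
Qed.

Lemma ln_conc (R : realType) (l p q : R) : 0 <= l -> l <= 1 -> 0 < p -> 0 < q ->
  l * ln p + (1 - l) * ln q <= ln (l * p + (1 - l) * q).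
Proof.
move=> l0 l1 p0 q0; have := @concave_ln R (Itv01 l0 l1) p q p0 q0.
by rewrite !convRE /=.
Qed.

Lemma key (R : realType) (c x y l : R) (u : R -> R) : 0 <= l -> l <= 1 ->
  0 < expR (c * x) * u x -> 0 < expR (c * y) * u y ->
  l * u x + (1 - l) * u y <= u (l * x + (1 - l) * y) ->
  (expR (c * x) * u x) `^ l * (expR (c * y) * u y) `^ (1 - l) <=
  expR (c * (l * x + (1 - l) * y)) * u (l * x + (1 - l) * y).
Proof.
move=> l0 l1 hx hy hu.
have ux : 0 < u x by move: hx; rewrite pmulr_rgt0 // expR_gt0.
have uy : 0 < u y by move: hy; rewrite pmulr_rgt0 // expR_gt0.
have hm : 0 < l * u x + (1 - l) * u y.
  have [->|ln0] := eqVneq l 0; first by rewrite mul0r add0r subr0 mul1r.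
  apply: ltr_pwDl; first by rewrite mulr_gt0 // lt_neqAle eq_sym ln0.
  by rewrite mulr_ge0 ?subr_ge0 // ltW.
rewrite /powR (gt_eqF hx) (gt_eqF hy).
rewrite !lnM ?posrE ?expR_gt0 // !expRK -expRD.
apply: (@le_trans _ _ (expR (c * (l * x + (1 - l) * y)) * (l * u x + (1 - l) * u y))); last first.
  by rewrite ler_wpM2l // expR_ge0.
rewrite -[X in _ <= _ * X]lnK ?posrE // -expRD ler_expR.
have -> : l * (c * x + ln (u x)) + (1 - l) * (c * y + ln (u y)) =
   c * (l * x + (1 - l) * y) + (l * ln (u x) + (1 - l) * ln (u y)) by ring.
by rewrite lerD2l ln_conc.
Qed.

Definition uf {R : realType} (n : nat) (b a : nat -> R) (t : R) : R :=
  b 1%N - \sum_(2 <= i < n.+1) b i * expR (- (a i - a 1%N) * t).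

Lemma gfunE (R : realType) (n : nat) (b a : nat -> R) (t : R) :
  @gfun R n b a t = expR (- a 1%N * t) * uf n b a t.
Proof.
rewrite /gfun /uf mulrBr mulr_sumr mulrC; congr (_ - _).
apply: eq_bigr => i _; rewrite mulrCA -expRD; congr (b i * expR _); ring.
Qed.

Lemma uf_conc (R : realType) (n : nat) (b a : nat -> R) (x y l : R) :
  (forall i, (2 <= i <= n)%N -> 0 <= b i) -> 0 <= l -> l <= 1 ->
  l * uf n b a x + (1 - l) * uf n b a y <= uf n b a (l * x + (1 - l) * y).
Proof.
move=> bp l0 l1.
set Sx := \sum_(2 <= i < n.+1) b i * expR (- (a i - a 1%N) * x).
set Sy := \sum_(2 <= i < n.+1) b i * expR (- (a i - a 1%N) * y).
set Sz := \sum_(2 <= i < n.+1) b i * expR (- (a i - a 1%N) * (l * x + (1 - l) * y)).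
have H : Sz <= l * Sx + (1 - l) * Sy.
  rewrite /Sx /Sy /Sz !mulr_sumr -big_split /=.
  apply: ler_sum_nat => i /andP[i2 iN].
  have bi : 0 <= b i by apply: bp; rewrite i2 -ltnS.
  have -> : - (a i - a 1%N) * (l * x + (1 - l) * y) =
     l * (- (a i - a 1%N) * x) + (1 - l) * (- (a i - a 1%N) * y) by ring.
  apply: (le_trans (ler_wpM2l bi (@expR_conv R l (- (a i - a 1%N) * x) (- (a i - a 1%N) * y) l0 l1))).
  by rewrite le_eqVlt; apply/orP; left; apply/eqP; ring.
rewrite /uf -/Sx -/Sy -/Sz.
have -> : l * (b 1%N - Sx) + (1 - l) * (b 1%N - Sy) = b 1%N - (l * Sx + (1 - l) * Sy) by ring.
by rewrite lerD2l lerN2.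
Qed.

Theorem lemma7 (R : realType) (n : nat) (b a : nat -> R) :
  (1 <= n)%N ->
  (forall i, (1 <= i <= n)%N -> 0 < b i) ->
  (forall i, (1 <= i <= n)%N -> 0 < a i) ->
  (forall j, (2 <= j <= n)%N -> forall i, (1 <= i <= n)%N ->
      (a i - a j) ^+ 2 <= 2 * (a 1%N - a j) ^+ 2) ->
  ((forall t : R, 0 <= gind n b a t) <-> log_concave (gind n b a)).
Proof.
move=> n1 bpos _ _; split; last by case.
move=> gnn; split=> // x y l l0 l1.
have [fx0|fxp] : gind n b a x = 0 \/ 0 < gind n b a x.
  by move: (gnn x); rewrite le0r => /orP[/eqP->|->]; [left|right].
  rewrite fx0; have [->|ln0] := eqVneq l 0.
    by rewrite powRr0 subr0 powRr1 ?mul1r ?mul0r ?add0r.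
  by rewrite powR0 // mul0r.
have [fy0|fyp] : gind n b a y = 0 \/ 0 < gind n b a y.
  by move: (gnn y); rewrite le0r => /orP[/eqP->|->]; [left|right].
  rewrite fy0; have [->|ln1] := eqVneq l 1.
    by rewrite subrr powRr0 mulr1 powRr1 ?mul1r ?mul0r ?addr0 // ltW.
  by rewrite powR0 ?mulr0 // subr_eq0 eq_sym.
have x0 : 0 <= x by move: fxp; rewrite /gind; case: ifP => // _; rewrite ltxx.
have y0 : 0 <= y by move: fyp; rewrite /gind; case: ifP => // _; rewrite ltxx.
have z0 : 0 <= l * x + (1 - l) * y by rewrite addr_ge0 // mulr_ge0 // subr_ge0.
move: fxp fyp; rewrite /gind x0 y0 z0 !gfunE => fxp fyp.
apply: key => //; apply: uf_conc => // i /andP[i2 iN].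
by apply: ltW; apply: bpos; rewrite iN andbT (leq_trans _ i2).
Qed.
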